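(* Let $p\in\mathbb{R}^9$ with $\sum_i p(i)=1$, and let $\rho=\sum_{i=1}^9\left[4p(i)-\tfrac13\right]\Pi_i$. Then $\rho$ is a pure state (a rank-one orthogonal projector) if and only if $$\sum_{i=1}^9 p(i)^2=\frac16\quad\text{and}\quad \sum_{i=1}^9 p(i)^3=\frac12\sum_{(i,j,k)\in Q}p(i)p(j)p(k).$$
   Context: Let $\omega=e^{2\pi i/3}$ and let $|0\rangle,|1\rangle,|2\rangle$ be the standard basis of $\mathbb{C}^3$. Define $X|j\rangle=|j+1 \bmod 3\rangle$ and $Z|j\rangle=\omega^j|j\rangle$. Let $|\psi_0\rangle=\frac{1}{\sqrt2}(0,1,-1)^T$. For $m,n\in\{0,1,2\}$ put $i=3m+n+1$ and let $\Pi_i$ be the orthogonal projector onto $X^mZ^n|\psi_0\rangle$ (the canonical Hesse SIC); $\rho$ is the unique trace-one Hermitian operator with $p(i)=\frac13\operatorname{Tr}(\rho\Pi_i)$. Identify the index $i=3m+n+1$ with the point $(m,n)\in\mathbb{Z}_3^2$. The 12 lines of the affine plane $\mathbb{Z}_3^2$ are $\{1,2,3\},\{4,5,6\},\{7,8,9\},\{1,4,7\},\{2,5,8\},\{3,6,9\},\{1,5,9\},\{2,6,7\},\{3,4,8\},\{1,6,8\},\{2,4,9\},\{3,5,7\}$. $Q$ denotes the set of ordered triples $(i,j,k)$ of pairwise distinct indices with $\{i,j,k\}$ one of these lines. *)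

(* Defs.v *)
From HB Require Import structures.
From mathcomp Require Import all_boot all_order all_algebra all_field.
Set Implicit Arguments. Unset Strict Implicit. Unset Printing Implicit Defensive.
Import Order.TTheory GRing.Theory Num.Theory.
Local Open Scope ring_scope.

(* omega = e^{2 pi i/3} = -1/2 + i sqrt(3)/2 *)
Definition omega : algC := (-1 + 'i * sqrtC 3) / 2%:R.

(* shift X |j> = |j+1 mod 3>, clock Z |j> = omega^j |j> *)
Definition Xop : 'M[algC]_3 := \matrix_(i, j) ((i : nat) == (j.+1 %% 3)%N)%:R.
Definition Zop : 'M[algC]_3 := \matrix_(i, j) (((i : nat) == j)%:R * omega ^+ i).

Definition psi0 : 'cV[algC]_3 :=
  (sqrtC 2%:R)^-1 *: \col_(i < 3) (if (i : nat) == 1%N then 1 else if (i : nat) == 2%N then -1 else 0).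

Definition adj {m n} (A : 'M[algC]_(m, n)) : 'M[algC]_(n, m) := (map_mx (fun x => x^*) A)^T.

(* Index k : 'I_9 (0-based, k = i - 1 = 3m + n) corresponds to (m,n) = (k/3, k mod 3). *)
Definition sicvec (k : 'I_9) : 'cV[algC]_3 := Xop ^+ (k %/ 3) *m Zop ^+ (k %% 3) *m psi0.
Definition Pi (k : 'I_9) : 'M[algC]_3 := sicvec k *m adj (sicvec k).

(* the 12 lines of the affine plane, as listed in the paper (1-based) *)
Definition lines1 : seq (nat * nat * nat) :=
  [:: (1,2,3); (4,5,6); (7,8,9); (1,4,7); (2,5,8); (3,6,9);
      (1,5,9); (2,6,7); (3,4,8); (1,6,8); (2,4,9); (3,5,7)]%N.

Definition ix (a : nat) : 'I_9 := inord a.-1.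

Definition lines : seq {set 'I_9} :=
  [seq [set ix t.1.1; ix t.1.2; ix t.2] | t <- lines1].

Definition inQ (i j k : 'I_9) : bool :=
  [&& i != j, j != k, i != k & [set i; j; k] \in lines].

Definition rho_of (p : 'I_9 -> algC) : 'M[algC]_3 :=
  \sum_(i < 9) (4%:R * p i - 3%:R^-1) *: Pi i.

Definition pure_state (r : 'M[algC]_3) : Prop :=
  [/\ r *m r = r, adj r = r & \rank r = 1%N].

(* Main.v *)
Require Import Defs.
From HB Require Import structures.
From mathcomp Require Import all_boot all_order all_algebra all_field.
From mathcomp Require Import ring.
Import Order.TTheory GRing.Theory Num.Theory.
Local Open Scope ring_scope.

Lemma sum3 (F : 'I_3 -> algC) : \sum_(i < 3) F i = F (inord 0) + F (inord 1) + F (inord 2).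
Proof.
rewrite !big_ord_recl big_ord0 addr0 addrA.
by congr (F _ + F _ + F _); apply/val_inj; rewrite /= inordK.
Qed.

Lemma sum9 (F : 'I_9 -> algC) : \sum_(i < 9) F i = F (inord 0) + F (inord 1) + F (inord 2)
  + F (inord 3) + F (inord 4) + F (inord 5) + F (inord 6) + F (inord 7) + F (inord 8).
Proof.
rewrite !big_ord_recl big_ord0 addr0 !addrA.
by congr (F _ + F _ + F _ + F _ + F _ + F _ + F _ + F _ + F _); apply/val_inj; rewrite /= inordK.
Qed.

Lemma hw : omega ^+ 2 = -1 - omega.
Proof.
have h2 : 2%:R * omega = -1 + 'i * sqrtC 3%:R.
  by rewrite /omega mulrC divfK // pnatr_eq0.
have ha : (('i : algC) * sqrtC 3%:R) ^+ 2 = - 3%:R.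
  by rewrite exprMn sqrCi sqrtCK; ring.
have : 4%:R * (omega ^+ 2 + omega + 1) = 0.
  have -> : 4%:R * (omega ^+ 2 + omega + 1) = (2%:R * omega) ^+2 + 2%:R * (2%:R * omega) + 4%:R by ring.
  rewrite h2; ring: ha.
move/eqP; rewrite mulf_eq0 pnatr_eq0 /= => /eqP h.
by apply/eqP; rewrite -subr_eq0; apply/eqP; rewrite -h; ring.
Qed.

Lemma conj3 : (sqrtC 3%:R : algC)^* = sqrtC 3%:R.
Proof. by apply/CrealP; apply/ger0_real; rewrite sqrtC_ge0 ler0n. Qed.

Lemma cw : omega^* = -1 - omega.
Proof.
rewrite /omega rmorphM rmorphD rmorphN rmorph1 rmorphM /= conjCi conj3 fmorphV /= rmorph_nat.
by field.
Qed.

Definition ecol : 'cV[algC]_3 :=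
  \col_(i < 3) (if (i : nat) == 1%N then 1 else if (i : nat) == 2%N then -1 else 0).
Definition uvec_def (k : 'I_9) := Xop ^+ (k %/ 3) *m (Zop ^+ (k %% 3) *m ecol).
Fact uvec_key : unit. Proof. by []. Qed.
Definition uvec := locked_with uvec_key uvec_def.
Lemma uvecE k : uvec k = uvec_def k. Proof. by rewrite /uvec unlock. Qed.

Lemma sicvecE k : sicvec k = (sqrtC 2%:R)^-1 *: uvec k.
Proof. by rewrite /sicvec uvecE /uvec_def /psi0 !scalemxAr mulmxA. Qed.

Lemma conj2 : (sqrtC 2%:R : algC)^* = sqrtC 2%:R.
Proof. by apply/CrealP; apply/ger0_real; rewrite sqrtC_ge0 ler0n. Qed.

Lemma PiE k i j : Pi k i j = 2%:R^-1 * (uvec k i ord0 * (uvec k j ord0)^*).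
Proof.
rewrite /Pi sicvecE /adj mxE big_ord1 !mxE rmorphM fmorphV /= conj2.
have hs : (sqrtC 2%:R)^-1 * (sqrtC 2%:R)^-1 = 2%:R^-1 :> algC.
  by rewrite -invfM -expr2 sqrtCK.
ring: hs.
Qed.

Lemma rhoE (p : 'I_9 -> algC) i j :
  rho_of p i j = \sum_(k < 9) (4%:R * p k - 3%:R^-1) * Pi k i j.
Proof. by rewrite /rho_of summxE; apply: eq_bigr => k _; rewrite mxE. Qed.

Lemma X0 (A : 'cV[algC]_3) : (Xop *m A) (inord 0) ord0 = A (inord 2) ord0.
Proof. by rewrite mxE sum3 !mxE !inordK //= !(mul0r, mul1r, add0r, addr0). Qed.

Lemma X1 (A : 'cV[algC]_3) : (Xop *m A) (inord 1) ord0 = A (inord 0) ord0.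
Proof. by rewrite mxE sum3 !mxE !inordK //= !(mul0r, mul1r, add0r, addr0). Qed.

Lemma X2 (A : 'cV[algC]_3) : (Xop *m A) (inord 2) ord0 = A (inord 1) ord0.
Proof. by rewrite mxE sum3 !mxE !inordK //= !(mul0r, mul1r, add0r, addr0). Qed.

Lemma Z0 (A : 'cV[algC]_3) : (Zop *m A) (inord 0) ord0 = A (inord 0) ord0.
Proof. by rewrite mxE sum3 !mxE !inordK //= ?expr0 ?expr1 !(mul0r, mulr0, mul1r, add0r, addr0). Qed.

Lemma Z1 (A : 'cV[algC]_3) : (Zop *m A) (inord 1) ord0 = omega * A (inord 1) ord0.
Proof. by rewrite mxE sum3 !mxE !inordK //= ?expr0 ?expr1 !(mul0r, mulr0, mul1r, add0r, addr0). Qed.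

Lemma Z2 (A : 'cV[algC]_3) : (Zop *m A) (inord 2) ord0 = omega ^+ 2 * A (inord 2) ord0.
Proof. by rewrite mxE sum3 !mxE !inordK //= ?expr0 ?expr1 !(mul0r, mulr0, mul1r, add0r, addr0). Qed.

Lemma e0 : ecol (inord 0) ord0 = 0.
Proof. by rewrite mxE inordK. Qed.

Lemma e1 : ecol (inord 1) ord0 = 1.
Proof. by rewrite mxE inordK. Qed.

Lemma e2 : ecol (inord 2) ord0 = -1.
Proof. by rewrite mxE inordK. Qed.

Lemma uv0 : uvec (inord 0) = ecol.
Proof. rewrite uvecE /uvec_def.
have -> : ((inord 0 : 'I_9) %/ 3 = 0)%N by rewrite inordK.
have -> : ((inord 0 : 'I_9) %% 3 = 0)%N by rewrite inordK.
by rewrite ?expr0 ?expr1 ?expr2 -?mulmxE ?mul1mx -?mulmxA. Qed.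

Lemma uv1 : uvec (inord 1) = Zop *m ecol.
Proof. rewrite uvecE /uvec_def.
have -> : ((inord 1 : 'I_9) %/ 3 = 0)%N by rewrite inordK.
have -> : ((inord 1 : 'I_9) %% 3 = 1)%N by rewrite inordK.
by rewrite ?expr0 ?expr1 ?expr2 -?mulmxE ?mul1mx -?mulmxA. Qed.

Lemma uv2 : uvec (inord 2) = Zop *m (Zop *m ecol).
Proof. rewrite uvecE /uvec_def.
have -> : ((inord 2 : 'I_9) %/ 3 = 0)%N by rewrite inordK.
have -> : ((inord 2 : 'I_9) %% 3 = 2)%N by rewrite inordK.
by rewrite ?expr0 ?expr1 ?expr2 -?mulmxE ?mul1mx -?mulmxA. Qed.

Lemma uv3 : uvec (inord 3) = Xop *m ecol.
Proof. rewrite uvecE /uvec_def.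
have -> : ((inord 3 : 'I_9) %/ 3 = 1)%N by rewrite inordK.
have -> : ((inord 3 : 'I_9) %% 3 = 0)%N by rewrite inordK.
by rewrite ?expr0 ?expr1 ?expr2 -?mulmxE ?mul1mx -?mulmxA. Qed.

Lemma uv4 : uvec (inord 4) = Xop *m (Zop *m ecol).
Proof. rewrite uvecE /uvec_def.
have -> : ((inord 4 : 'I_9) %/ 3 = 1)%N by rewrite inordK.
have -> : ((inord 4 : 'I_9) %% 3 = 1)%N by rewrite inordK.
by rewrite ?expr0 ?expr1 ?expr2 -?mulmxE ?mul1mx -?mulmxA. Qed.

Lemma uv5 : uvec (inord 5) = Xop *m (Zop *m (Zop *m ecol)).
Proof. rewrite uvecE /uvec_def.
have -> : ((inord 5 : 'I_9) %/ 3 = 1)%N by rewrite inordK.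
have -> : ((inord 5 : 'I_9) %% 3 = 2)%N by rewrite inordK.
by rewrite ?expr0 ?expr1 ?expr2 -?mulmxE ?mul1mx -?mulmxA. Qed.

Lemma uv6 : uvec (inord 6) = Xop *m (Xop *m ecol).
Proof. rewrite uvecE /uvec_def.
have -> : ((inord 6 : 'I_9) %/ 3 = 2)%N by rewrite inordK.
have -> : ((inord 6 : 'I_9) %% 3 = 0)%N by rewrite inordK.
by rewrite ?expr0 ?expr1 ?expr2 -?mulmxE ?mul1mx -?mulmxA. Qed.

Lemma uv7 : uvec (inord 7) = Xop *m (Xop *m (Zop *m ecol)).
Proof. rewrite uvecE /uvec_def.
have -> : ((inord 7 : 'I_9) %/ 3 = 2)%N by rewrite inordK.
have -> : ((inord 7 : 'I_9) %% 3 = 1)%N by rewrite inordK.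
by rewrite ?expr0 ?expr1 ?expr2 -?mulmxE ?mul1mx -?mulmxA. Qed.

Lemma uv8 : uvec (inord 8) = Xop *m (Xop *m (Zop *m (Zop *m ecol))).
Proof. rewrite uvecE /uvec_def.
have -> : ((inord 8 : 'I_9) %/ 3 = 2)%N by rewrite inordK.
have -> : ((inord 8 : 'I_9) %% 3 = 2)%N by rewrite inordK.
by rewrite ?expr0 ?expr1 ?expr2 -?mulmxE ?mul1mx -?mulmxA. Qed.

Lemma rho00 (p : 'I_9 -> algC) : rho_of p (inord 0) (inord 0) =
  (- 1%:R + 2%:R*(p (inord 8)) + 2%:R*(p (inord 7)) + 2%:R*(p (inord 6)) + 2%:R*(p (inord 5)) + 2%:R*(p (inord 4)) + 2%:R*(p (inord 3))) + (0) * omega.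
Proof.
rewrite rhoE sum9 !PiE !uv0 !uv1 !uv2 !uv3 !uv4 !uv5 !uv6 !uv7 !uv8.
rewrite !(X0, X1, X2, Z0, Z1, Z2, e0, e1, e2).
move: cw hw; generalize omega => w cw' hw'.
rewrite ?(rmorphM, rmorphN, rmorph1, rmorph0, rmorphXn) /= ?cw'.
by field: hw'.
Qed.

Lemma rho01 (p : 'I_9 -> algC) : rho_of p (inord 0) (inord 1) =
  (2%:R*(p (inord 7)) - 2%:R*(p (inord 6))) + (- 2%:R*(p (inord 8)) + 2%:R*(p (inord 7))) * omega.
Proof.
rewrite rhoE sum9 !PiE !uv0 !uv1 !uv2 !uv3 !uv4 !uv5 !uv6 !uv7 !uv8.
rewrite !(X0, X1, X2, Z0, Z1, Z2, e0, e1, e2).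
move: cw hw; generalize omega => w cw' hw'.
rewrite ?(rmorphM, rmorphN, rmorph1, rmorph0, rmorphXn) /= ?cw'.
by field: hw'.
Qed.

Lemma rho02 (p : 'I_9 -> algC) : rho_of p (inord 0) (inord 2) =
  (2%:R*(p (inord 5)) - 2%:R*(p (inord 3))) + (2%:R*(p (inord 5)) - 2%:R*(p (inord 4))) * omega.
Proof.
rewrite rhoE sum9 !PiE !uv0 !uv1 !uv2 !uv3 !uv4 !uv5 !uv6 !uv7 !uv8.
rewrite !(X0, X1, X2, Z0, Z1, Z2, e0, e1, e2).
move: cw hw; generalize omega => w cw' hw'.
rewrite ?(rmorphM, rmorphN, rmorph1, rmorph0, rmorphXn) /= ?cw'.
by field: hw'.
Qed.

Lemma rho10 (p : 'I_9 -> algC) : rho_of p (inord 1) (inord 0) =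
  (2%:R*(p (inord 8)) - 2%:R*(p (inord 6))) + (2%:R*(p (inord 8)) - 2%:R*(p (inord 7))) * omega.
Proof.
rewrite rhoE sum9 !PiE !uv0 !uv1 !uv2 !uv3 !uv4 !uv5 !uv6 !uv7 !uv8.
rewrite !(X0, X1, X2, Z0, Z1, Z2, e0, e1, e2).
move: cw hw; generalize omega => w cw' hw'.
rewrite ?(rmorphM, rmorphN, rmorph1, rmorph0, rmorphXn) /= ?cw'.
by field: hw'.
Qed.

Lemma rho11 (p : 'I_9 -> algC) : rho_of p (inord 1) (inord 1) =
  (- 1%:R + 2%:R*(p (inord 8)) + 2%:R*(p (inord 7)) + 2%:R*(p (inord 6)) + 2%:R*(p (inord 2)) + 2%:R*(p (inord 1)) + 2%:R*(p (inord 0))) + (0) * omega.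
Proof.
rewrite rhoE sum9 !PiE !uv0 !uv1 !uv2 !uv3 !uv4 !uv5 !uv6 !uv7 !uv8.
rewrite !(X0, X1, X2, Z0, Z1, Z2, e0, e1, e2).
move: cw hw; generalize omega => w cw' hw'.
rewrite ?(rmorphM, rmorphN, rmorph1, rmorph0, rmorphXn) /= ?cw'.
by field: hw'.
Qed.

Lemma rho12 (p : 'I_9 -> algC) : rho_of p (inord 1) (inord 2) =
  (2%:R*(p (inord 1)) - 2%:R*(p (inord 0))) + (- 2%:R*(p (inord 2)) + 2%:R*(p (inord 1))) * omega.
Proof.
rewrite rhoE sum9 !PiE !uv0 !uv1 !uv2 !uv3 !uv4 !uv5 !uv6 !uv7 !uv8.
rewrite !(X0, X1, X2, Z0, Z1, Z2, e0, e1, e2).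
move: cw hw; generalize omega => w cw' hw'.
rewrite ?(rmorphM, rmorphN, rmorph1, rmorph0, rmorphXn) /= ?cw'.
by field: hw'.
Qed.

Lemma rho20 (p : 'I_9 -> algC) : rho_of p (inord 2) (inord 0) =
  (2%:R*(p (inord 4)) - 2%:R*(p (inord 3))) + (- 2%:R*(p (inord 5)) + 2%:R*(p (inord 4))) * omega.
Proof.
rewrite rhoE sum9 !PiE !uv0 !uv1 !uv2 !uv3 !uv4 !uv5 !uv6 !uv7 !uv8.
rewrite !(X0, X1, X2, Z0, Z1, Z2, e0, e1, e2).
move: cw hw; generalize omega => w cw' hw'.
rewrite ?(rmorphM, rmorphN, rmorph1, rmorph0, rmorphXn) /= ?cw'.
by field: hw'.
Qed.

Lemma rho21 (p : 'I_9 -> algC) : rho_of p (inord 2) (inord 1) =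
  (2%:R*(p (inord 2)) - 2%:R*(p (inord 0))) + (2%:R*(p (inord 2)) - 2%:R*(p (inord 1))) * omega.
Proof.
rewrite rhoE sum9 !PiE !uv0 !uv1 !uv2 !uv3 !uv4 !uv5 !uv6 !uv7 !uv8.
rewrite !(X0, X1, X2, Z0, Z1, Z2, e0, e1, e2).
move: cw hw; generalize omega => w cw' hw'.
rewrite ?(rmorphM, rmorphN, rmorph1, rmorph0, rmorphXn) /= ?cw'.
by field: hw'.
Qed.

Lemma rho22 (p : 'I_9 -> algC) : rho_of p (inord 2) (inord 2) =
  (- 1%:R + 2%:R*(p (inord 5)) + 2%:R*(p (inord 4)) + 2%:R*(p (inord 3)) + 2%:R*(p (inord 2)) + 2%:R*(p (inord 1)) + 2%:R*(p (inord 0))) + (0) * omega.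
Proof.
rewrite rhoE sum9 !PiE !uv0 !uv1 !uv2 !uv3 !uv4 !uv5 !uv6 !uv7 !uv8.
rewrite !(X0, X1, X2, Z0, Z1, Z2, e0, e1, e2).
move: cw hw; generalize omega => w cw' hw'.
rewrite ?(rmorphM, rmorphN, rmorph1, rmorph0, rmorphXn) /= ?cw'.
by field: hw'.
Qed.

Lemma tr1E (A : 'M[algC]_3) : \tr A = A (inord 0) (inord 0) + A (inord 1) (inord 1) + A (inord 2) (inord 2).
Proof. by rewrite /mxtrace sum3. Qed.

Lemma tr2E (A : 'M[algC]_3) : \tr (A *m A) = A (inord 0) (inord 0) * A (inord 0) (inord 0) + A (inord 0) (inord 1) * A (inord 1) (inord 0) + A (inord 0) (inord 2) * A (inord 2) (inord 0) + A (inord 1) (inord 0) * A (inord 0) (inord 1) + A (inord 1) (inord 1) * A (inord 1) (inord 1) + A (inord 1) (inord 2) * A (inord 2) (inord 1) + A (inord 2) (inord 0) * A (inord 0) (inord 2) + A (inord 2) (inord 1) * A (inord 1) (inord 2) + A (inord 2) (inord 2) * A (inord 2) (inord 2).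
Proof. rewrite /mxtrace !sum3 !mxE !sum3; ring. Qed.

Lemma tr3E (A : 'M[algC]_3) : \tr (A *m A *m A) = A (inord 0) (inord 0) * A (inord 0) (inord 0) * A (inord 0) (inord 0) + A (inord 0) (inord 0) * A (inord 0) (inord 1) * A (inord 1) (inord 0) + A (inord 0) (inord 0) * A (inord 0) (inord 2) * A (inord 2) (inord 0) + A (inord 0) (inord 1) * A (inord 1) (inord 0) * A (inord 0) (inord 0) + A (inord 0) (inord 1) * A (inord 1) (inord 1) * A (inord 1) (inord 0) + A (inord 0) (inord 1) * A (inord 1) (inord 2) * A (inord 2) (inord 0) + A (inord 0) (inord 2) * A (inord 2) (inord 0) * A (inord 0) (inord 0) + A (inord 0) (inord 2) * A (inord 2) (inord 1) * A (inord 1) (inord 0) + A (inord 0) (inord 2) * A (inord 2) (inord 2) * A (inord 2) (inord 0) + A (inord 1) (inord 0) * A (inord 0) (inord 0) * A (inord 0) (inord 1) + A (inord 1) (inord 0) * A (inord 0) (inord 1) * A (inord 1) (inord 1) + A (inord 1) (inord 0) * A (inord 0) (inord 2) * A (inord 2) (inord 1) + A (inord 1) (inord 1) * A (inord 1) (inord 0) * A (inord 0) (inord 1) + A (inord 1) (inord 1) * A (inord 1) (inord 1) * A (inord 1) (inord 1) + A (inord 1) (inord 1) * A (inord 1) (inord 2) * A (inord 2) (inord 1) + A (inord 1) (inord 2) * A (inord 2) (inord 0) * A (inord 0) (inord 1) + A (inord 1) (inord 2) * A (inord 2) (inord 1) * A (inord 1) (inord 1) + A (inord 1) (inord 2) *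 A (inord 2) (inord 2) * A (inord 2) (inord 1) + A (inord 2) (inord 0) * A (inord 0) (inord 0) * A (inord 0) (inord 2) + A (inord 2) (inord 0) * A (inord 0) (inord 1) * A (inord 1) (inord 2) + A (inord 2) (inord 0) * A (inord 0) (inord 2) * A (inord 2) (inord 2) + A (inord 2) (inord 1) * A (inord 1) (inord 0) * A (inord 0) (inord 2) + A (inord 2) (inord 1) * A (inord 1) (inord 1) * A (inord 1) (inord 2) + A (inord 2) (inord 1) * A (inord 1) (inord 2) * A (inord 2) (inord 2) + A (inord 2) (inord 2) * A (inord 2) (inord 0) * A (inord 0) (inord 2) + A (inord 2) (inord 2) * A (inord 2) (inord 1) * A (inord 1) (inord 2) + A (inord 2) (inord 2) * A (inord 2) (inord 2) * A (inord 2) (inord 2).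
Proof. rewrite /mxtrace !sum3 !mxE !sum3 !mxE !sum3; ring. Qed.

Lemma T1E (p : 'I_9 -> algC) : \tr (rho_of p) = 4%:R * (\sum_(i < 9) p i) - 3%:R.
Proof.
rewrite tr1E !rho00 !rho11 !rho22 sum9.
by field.
Qed.

Lemma T2E (p : 'I_9 -> algC) : \tr (rho_of p *m rho_of p) =
  12%:R * (\sum_(i < 9) p i ^+ 2) + 4%:R * (\sum_(i < 9) p i) ^+ 2 - 8%:R * (\sum_(i < 9) p i) + 3%:R.
Proof.
rewrite tr2E !rho00 !rho01 !rho02 !rho10 !rho11 !rho12 !rho20 !rho21 !rho22 !sum9.
move: hw; generalize omega => w hw'.
by field: hw'.
Qed.

Definition Lsum (p : 'I_9 -> algC) := p (inord 0) * p (inord 1) * p (inord 2) + p (inord 3) * p (inord 4) * p (inord 5) + p (inord 6) * p (inord 7) * p (inord 8) + p (inord 0) * p (inord 3) * p (inord 6) + p (inord 1) * p (inord 4) * p (inord 7) + p (inord 2) * p (inord 5) * p (inord 8) + p (inord 0) * p (inord 4) * p (inord 8) + p (inord 1) * p (inord 5) * p (inord 6) + p (inord 2) * p (inord 3) * p (inord 7) + p (inord 0) * p (inord 5) * p (inord 7) + p (inord 1) * p (inord 3) * p (inord 8) + p (inord 2) * p (inord 4) * p (inord 6).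

Lemma T3E (p : 'I_9 -> algC) : \tr (rho_of p *m rho_of p *m rho_of p) =
  24%:R * (\sum_(i < 9) p i ^+ 3) - 72%:R * Lsum p + 36%:R * (\sum_(i < 9) p i) * (\sum_(i < 9) p i ^+ 2) + 4%:R * (\sum_(i < 9) p i) ^+ 3
  - 12%:R * (\sum_(i < 9) p i) ^+ 2 - 36%:R * (\sum_(i < 9) p i ^+ 2) + 12%:R * (\sum_(i < 9) p i) - 3%:R.
Proof.
rewrite tr3E !rho00 !rho01 !rho02 !rho10 !rho11 !rho12 !rho20 !rho21 !rho22 !sum9 /Lsum.
move: hw; generalize omega => w hw'.
by field: hw'.
Qed.

Definition eq3 (i j k a b c : 'I_9) :=
  all (fun x => x \in [:: a; b; c]) [:: i; j; k] && all (fun x => x \in [:: i; j; k]) [:: a; b; c].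

Lemma set3E (i j k a b c : 'I_9) : ([set i; j; k] == [set a; b; c]) = eq3 i j k a b c.
Proof.
rewrite eqEsubset !subUset !sub1set /eq3 /= !inE.
by rewrite ?orbF ?andbT !orbA !andbA.
Qed.

Lemma mem_map_has (T U : eqType) (f : T -> U) s x :
  (x \in map f s) = has (fun t => x == f t) s.
Proof. by elim: s => //= t s IH; rewrite in_cons IH. Qed.

Definition inQb (i j k : 'I_9) : bool :=
  [&& i != j, j != k, i != k &
    has (fun t => eq3 i j k (ix t.1.1) (ix t.1.2) (ix t.2)) lines1].

Lemma inQE i j k : inQ i j k = inQb i j k.
Proof.
rewrite /inQ /inQb /lines mem_map_has.
by congr [&& _, _, _ & _]; apply: eq_has => t; rewrite set3E.
Qed.

Lemma ordsum (G : 'I_9 -> algC) : \sum_(i < 9) G i = \sum_(i <- iota 0 9) G (inord i).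
Proof.
transitivity (\sum_(i < 9) G (inord i)).
  by apply: eq_bigr => i _; rewrite inord_val.
by rewrite -(big_mkord xpredT (fun i => G (inord i))).
Qed.

Definition eq3n (i j k a b c : nat) :=
  all (fun x => x \in [:: a; b; c]) [:: i; j; k] && all (fun x => x \in [:: i; j; k]) [:: a; b; c].

Definition inQn (i j k : nat) : bool :=
  [&& i != j, j != k, i != k &
    has (fun t => eq3n i j k t.1.1.-1 t.1.2.-1 t.2.-1) lines1].

Lemma inord_eq (a b : nat) : (a < 9)%N -> (b < 9)%N -> (inord a == inord b :> 'I_9) = (a == b).
Proof. by move=> ha hb; rewrite -val_eqE /= !inordK. Qed.

Lemma inQbn a b c : (a < 9)%N -> (b < 9)%N -> (c < 9)%N ->
  inQb (inord a) (inord b) (inord c) = inQn a b c.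
Proof.
move=> ha hb hc.
rewrite /inQb /inQn /eq3 /eq3n /ix /lines1 /= !inE.
by rewrite !inord_eq.
Qed.

Definition T729 : seq (nat * nat * nat) :=
  [seq (x, y) | x <- [seq (i, j) | i <- iota 0 9, j <- iota 0 9], y <- iota 0 9].

Lemma ordsum3 (H : 'I_9 -> 'I_9 -> 'I_9 -> algC) :
  \sum_(i < 9) \sum_(j < 9) \sum_(k < 9) H i j k =
  \sum_(t <- T729) H (inord t.1.1) (inord t.1.2) (inord t.2).
Proof.
rewrite /T729 !big_allpairs ordsum; apply: eq_bigr => i _.
rewrite ordsum; apply: eq_bigr => j _.
by rewrite ordsum.
Qed.

Lemma Qsum (p : 'I_9 -> algC) :
  \sum_(i < 9) \sum_(j < 9) \sum_(k < 9 | inQ i j k) p i * p j * p k = 6%:R * Lsum p.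
Proof.
have -> : \sum_(i < 9) \sum_(j < 9) \sum_(k < 9 | inQ i j k) p i * p j * p k =
  \sum_(i < 9) \sum_(j < 9) \sum_(k < 9) (if inQ i j k then p i * p j * p k else 0).
  by apply: eq_bigr => i _; apply: eq_bigr => j _; rewrite big_mkcond.
rewrite ordsum3.
rewrite (eq_big_seq (fun t => if inQn t.1.1 t.1.2 t.2 then
   p (inord t.1.1) * p (inord t.1.2) * p (inord t.2) else 0)); last first.
  move=> t /allpairsP [[x y] [/allpairsP [[i j] [hi hj ->]] hy ->]] /=.
  rewrite mem_iota in hi; rewrite mem_iota in hj; rewrite mem_iota in hy.
  by rewrite inQE inQbn.
rewrite -big_mkcond -big_filter.
have -> : filter (fun t => inQn t.1.1 t.1.2 t.2) T729 = [:: (0, 1, 2); (0, 2, 1); (0, 3, 6); (0, 4, 8); (0, 5, 7); (0, 6, 3); (0, 7, 5); (0, 8, 4); (1, 0, 2); (1, 2, 0); (1, 3, 8); (1, 4, 7); (1, 5, 6); (1, 6, 5); (1, 7, 4); (1, 8, 3); (2, 0, 1); (2, 1, 0); (2, 3, 7); (2, 4, 6); (2, 5, 8); (2, 6, 4); (2, 7, 3); (2, 8, 5); (3, 0, 6); (3, 1, 8); (3, 2, 7); (3, 4, 5); (3, 5, 4); (3, 6, 0); (3, 7, 2); (3, 8, 1); (4, 0, 8); (4, 1, 7); (4, 2, 6); (4, 3, 5); (4, 5, 3); (4, 6, 2); (4, 7, 1); (4, 8, 0); (5, 0, 7); (5, 1, 6); (5, 2, 8); (5, 3, 4); (5, 4,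 3); (5, 6, 1); (5, 7, 0); (5, 8, 2); (6, 0, 3); (6, 1, 5); (6, 2, 4); (6, 3, 0); (6, 4, 2); (6, 5, 1); (6, 7, 8); (6, 8, 7); (7, 0, 5); (7, 1, 4); (7, 2, 3); (7, 3, 2); (7, 4, 1); (7, 5, 0); (7, 6, 8); (7, 8, 6); (8, 0, 4); (8, 1, 3); (8, 2, 5); (8, 3, 1); (8, 4, 0); (8, 5, 2); (8, 6, 7); (8, 7, 6)] by vm_compute.
rewrite !big_cons big_nil /Lsum /=.
ring.
Qed.

Lemma CHent (A : 'M[algC]_3) a b : (a < 3)%N -> (b < 3)%N ->
  6%:R * (A *m A *m A) (inord a) (inord b) =
  6%:R * \tr A * (A *m A) (inord a) (inord b) - 3%:R * (\tr A ^+ 2 - \tr (A *m A)) * A (inord a) (inord b)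
  + (a == b)%:R * (\tr A ^+ 3 - 3%:R * \tr A * \tr (A *m A) + 2%:R * \tr (A *m A *m A)).
Proof.
case: a => [|[|[|//]]] _; case: b => [|[|[|//]]] _;
  rewrite /mxtrace !sum3 !mxE !sum3 !mxE !sum3 /=; ring.
Qed.

Lemma CH3 (A : 'M[algC]_3) : \tr A = 1 -> \tr (A *m A) = 1 -> \tr (A *m A *m A) = 1 ->
  A *m A *m A = A *m A.
Proof.
move=> h1 h2 h3; apply/matrixP => i j.
have := @CHent A i j (ltn_ord i) (ltn_ord j); rewrite !inord_val h1 h2 h3 => K.
apply: (mulfI (x := 6%:R)); first by rewrite pnatr_eq0.
by rewrite K; ring.
Qed.

Lemma adjE m n (A : 'M[algC]_(m, n)) i j : adj A i j = (A j i)^*.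
Proof. by rewrite /adj !mxE. Qed.

Lemma herm_sq0 (B : 'M[algC]_3) : adj B = B -> B *m B = 0 -> B = 0.
Proof.
move=> hB h0; apply/matrixP => i j; rewrite mxE.
have hij k l : B l k = (B k l)^* by rewrite -{1}hB adjE.
have := congr1 (fun M : 'M[algC]_3 => M i i) h0; rewrite !mxE => hs.
have hs' : \sum_(l < 3) `|B i l| ^+ 2 = 0.
  by rewrite -[RHS]hs; apply: eq_bigr => l _; rewrite (hij i l) normCK.
have := psumr_eq0P (P := xpredT) (fun l _ => exprn_ge0 2 (normr_ge0 (B i l))) hs' (i := j) isT.
by move/eqP; rewrite expf_eq0 /= normr_eq0 => /eqP.
Qed.

Lemma adjM (A B : 'M[algC]_3) : adj (A *m B) = adj B *m adj A.
Proof.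
apply/matrixP => i j; rewrite adjE !mxE rmorph_sum; apply: eq_bigr => k _.
by rewrite !adjE rmorphM mulrC.
Qed.

Lemma adjB (A B : 'M[algC]_3) : adj (A - B) = adj A - adj B.
Proof. by apply/matrixP => i j; rewrite !mxE rmorphB. Qed.

Lemma trace_idem (A : 'M[algC]_3) : A *m A = A -> \tr A = (\rank A)%:R.
Proof.
move=> hA.
have hxy : col_base A *m row_base A = A := mulmx_base A.
have hyx : row_base A *m col_base A = 1%:M.
  apply: (row_free_inj (row_base_free A)).
  apply: (row_full_inj (col_base_full A)).
  move: hxy; move: (col_base A) (row_base A) => x y hxy.
  by rewrite mul1mx !mulmxA hxy -mulmxA hxy hA.
by rewrite -{1}hxy mxtrace_mulC hyx mxtrace1.
Qed.

Lemma sq_zero (A : 'M[algC]_3) : A *m A *m A = A *m A -> (A *m A - A) *m (A *m A - A) = 0.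
Proof.
rewrite !mulmxE => h.
by rewrite mulrBl !mulrBr !mulrA !h !subrr.
Qed.

Lemma rho_herm (p : 'I_9 -> algC) : (forall i, p i \is Num.real) -> adj (rho_of p) = rho_of p.
Proof.
move=> preal; apply/matrixP => i j; rewrite adjE !rhoE rmorph_sum; apply: eq_bigr => k _.
have hk : (p k)^* = p k by apply/CrealP.
rewrite !PiE !rmorphM rmorphB rmorphM /= hk fmorphV !rmorph_nat conjCK.
by field.
Qed.

Theorem mainTheorem4 (p : 'I_9 -> algC)
  (preal : forall i, p i \is Num.real)
  (psum : \sum_(i < 9) p i = 1) :
  pure_state (rho_of p) <->
  (\sum_(i < 9) p i ^+ 2 = 6%:R^-1 /\
   \sum_(i < 9) p i ^+ 3 =
     2%:R^-1 * \sum_(i < 9) \sum_(j < 9) \sum_(k < 9 | inQ i j k) p i * p j * p k).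
Proof.
have t1 : \tr (rho_of p) = 1 by rewrite T1E psum; ring.
have E2 : \tr (rho_of p *m rho_of p) - 1 = 12%:R * (\sum_(i < 9) p i ^+ 2 - 6%:R^-1).
  by rewrite T2E psum; field.
have E3 : \tr (rho_of p *m rho_of p *m rho_of p) - 1 = 24%:R * (\sum_(i < 9) p i ^+ 3 -
     2%:R^-1 * \sum_(i < 9) \sum_(j < 9) \sum_(k < 9 | inQ i j k) p i * p j * p k).
  by rewrite T3E Qsum psum; field.
have hadj : adj (rho_of p) = rho_of p := rho_herm p preal.
move: E2 E3; set A := rho_of p => E2 E3.
split.
- case=> hAA _ _.
  have t2 : \tr (A *m A) = 1 by rewrite hAA.
  have t3 : \tr (A *m A *m A) = 1 by rewrite !hAA.
  move: E2 E3; rewrite t2 t3 subrr => /eqP E2 /eqP E3.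
  move: E2 E3; rewrite !(eq_sym 0) !mulf_eq0 !pnatr_eq0 /= !subr_eq0 => /eqP -> /eqP ->.
  by [].
- case=> h2 h3.
  move: E2 E3; rewrite h2 h3 !subrr !mulr0 => /eqP E2 /eqP E3.
  move: E2 E3; rewrite !subr_eq0 => /eqP t2 /eqP t3.
  have hA3 := CH3 A t1 t2 t3.
  have hB : adj (A *m A - A) = A *m A - A by rewrite adjB adjM hadj.
  have hAA : A *m A = A.
    by apply/eqP; rewrite -subr_eq0; apply/eqP; apply: herm_sq0 => //; exact: sq_zero.
  split => //.
  by apply/eqP; rewrite -(pnatr_eq1 algC) -trace_idem // t1.
Qed.
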